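(* Let $\varepsilon>0$ and let $A$ be a real symmetric matrix with top eigenvector $u_1$ (a unit vector), whose two largest eigenvalues are $\lambda_1=1+2\varepsilon$ (with eigenvector $u_1$) and $\lambda_2=1$, and such that $|\lambda_i|\le 1$ for all $i\ge 2$. Let $w$ be a vector with $\langle u_1,w\rangle^2\le\varepsilon/2$ and $\langle u_1,Aw\rangle^2\le\varepsilon/2$. Then \[ \left\|A\left(I-ww^\top\right)\right\|_{\mathrm{op}} > (1+\varepsilon)\min_{\|u\|_2=1}\left\|A\left(I-uu^\top\right)\right\|_{\mathrm{op}}. \]
   Context: $\|\cdot\|_{\mathrm{op}}$ denotes the spectral norm. *)

(* Defs.v *)
From HB Require Import structures.
From mathcomp Require Import all_boot all_order all_algebra.
From mathcomp Require Import all_classical all_reals.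
Set Implicit Arguments. Unset Strict Implicit. Unset Printing Implicit Defensive.
Import Order.TTheory GRing.Theory Num.Theory.
Local Open Scope ring_scope.
Local Open Scope classical_set_scope.

Definition vnorm (R : realType) (n : nat) (x : 'cV[R]_n) : R :=
  Num.sqrt (\sum_i x i 0 ^+ 2).

Definition vdot (R : realType) (n : nat) (x y : 'cV[R]_n) : R :=
  (x^T *m y) 0 0.

Definition opnorm (R : realType) (m n : nat) (M : 'M[R]_(m, n)) : R :=
  sup [set vnorm (M *m x) | x in [set x : 'cV[R]_n | vnorm x = 1]].

(* min over unit vectors u of || A (I - u u^T) ||_op, taken as an infimum
   (the minimum is attained by compactness) *)
Definition min_deflation (R : realType) (n : nat) (A : 'M[R]_n) : R :=
  inf [set opnorm (A *m (1%:M - u *m u^T)) | u in [set u : 'cV[R]_n | vnorm u = 1]].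

(* Main.v *)
Require Import Defs.
From HB Require Import structures.
From mathcomp Require Import all_boot all_order all_algebra.
From mathcomp Require Import all_classical all_reals.
From mathcomp Require Import ring lra.
Import Order.TTheory GRing.Theory Num.Theory.
Local Open Scope ring_scope.
Local Open Scope classical_set_scope.

Section H.
Variable R : realType.

Lemma sumsq (n : nat) (x : 'cV[R]_n) : \sum_i x i 0 ^+ 2 = (x^T *m x) 0 0.
Proof. rewrite mxE; apply: eq_bigr => i _; by rewrite !mxE expr2. Qed.

Lemma vnorm_orth (n : nat) (Q : 'M[R]_n) (x : 'cV[R]_n) :
  Q^T *m Q = 1%:M -> vnorm (Q *m x) = vnorm x.
Proof.
move=> HQ; rewrite /vnorm !sumsq trmx_mul mulmxA -(mulmxA _ Q^T) HQ mulmx1.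
by [].
Qed.

Lemma vnorm_ge0 (n : nat) (x : 'cV[R]_n) : 0 <= vnorm x.
Proof. exact: sqrtr_ge0. Qed.

Lemma vnorm_ge_coord (n : nat) (x : 'cV[R]_n) i : `|x i 0| <= vnorm x.
Proof.
rewrite /vnorm (bigD1 i) //= -[leLHS]sqrtr_sqr ler_sqrt; last first.
  by rewrite addr_ge0 ?sqr_ge0 // sumr_ge0 // => j _; rewrite sqr_ge0.
by rewrite lerDl sumr_ge0 // => j _; rewrite sqr_ge0.
Qed.

Lemma vnorm_unit_coord (n : nat) (x : 'cV[R]_n) i : vnorm x = 1 -> `|x i 0| <= 1.
Proof. by move=> <-; exact: vnorm_ge_coord. Qed.

Lemma opnorm_bounded (m n : nat) (M : 'M[R]_(m, n)) :
  has_ubound [set vnorm (M *m x) | x in [set x : 'cV[R]_n | vnorm x = 1]].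
Proof.
exists (Num.sqrt (\sum_i (\sum_j `|M i j|) ^+ 2)) => _ [x /= Hx <-].
rewrite /vnorm ler_sqrt; last by rewrite sumr_ge0 // => i _; rewrite sqr_ge0.
apply: ler_sum => i _; rewrite mxE.
rewrite -[leLHS]real_normK ?num_real //.
apply: lerXn2r; rewrite ?nnegrE ?normr_ge0 ?sumr_ge0 //.
apply: le_trans (ler_norm_sum _ _ _) _.
apply: ler_sum => j _; rewrite normrM -[leRHS]mulr1 ler_wpM2l //.
exact: vnorm_unit_coord.
Qed.

Lemma opnorm_ge (m n : nat) (M : 'M[R]_(m, n)) x : vnorm x = 1 ->
  vnorm (M *m x) <= opnorm M.
Proof.
move=> Hx; apply: sup_upper_bound; last by exists x.
split; last exact: opnorm_bounded.
by exists (vnorm (M *m x)); exists x.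
Qed.

Lemma vdot_sym (n : nat) (x y : 'cV[R]_n) : vdot x y = vdot y x.
Proof. by rewrite /vdot -[in LHS](trmxK y) -trmx_mul mxE. Qed.

Lemma coordUt (n : nat) (U : 'M[R]_n.+1) (v : 'cV[R]_n.+1) :
  (U^T *m v) 0 0 = vdot (col 0 U) v.
Proof. rewrite /vdot !mxE; apply: eq_bigr => k _; by rewrite !mxE. Qed.

Lemma vnorm_e0 (n : nat) : vnorm (delta_mx 0 0 : 'cV[R]_n.+1) = 1.
Proof.
by rewrite /vnorm sumsq trmx_delta mul_delta_mx mxE !eqxx /= sqrtr1.
Qed.

Lemma upper (n : nat) (d : 'rV[R]_n.+2) (z : 'cV[R]_n.+2) :
  (forall i : 'I_n.+2, (0 < i)%N -> `|d 0 i| <= 1) ->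
  vnorm (diag_mx d *m ((1%:M - (delta_mx 0 0 : 'cV[R]_n.+2) *m (delta_mx 0 0 : 'cV[R]_n.+2)^T) *m z)) <= vnorm z.
Proof.
move=> hdi; rewrite /vnorm ler_sqrt; last by rewrite sumr_ge0 // => i _; rewrite sqr_ge0.
apply: ler_sum => i _.
rewrite mul_diag_mx trmx_delta mul_delta_mx mulmxBl mul1mx !mxE.
rewrite (bigD1 ord0) //= big1 => [|j /negbTE hj]; last by rewrite !mxE hj andbF mul0r.
rewrite !mxE eqxx andbT addr0.
have [->|hi] := eqVneq i ord0. by rewrite /= mul1r subrr mulr0 expr0n /= sqr_ge0.
rewrite mul0r subr0.
have hpos : (0 < i)%N.
  by rewrite lt0n; move: hi; apply: contra => /eqP h; apply/eqP; apply: val_inj.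
move: (hdi i hpos).
rewrite ler_norml => /andP [h1 h2].
have h3 : 0 <= z i 0 ^+ 2 * ((1 - d 0 i) * (1 + d 0 i)).
  by rewrite mulr_ge0 ?sqr_ge0 // mulr_ge0 // ?subr_ge0 //; lra.
rewrite -subr_ge0; suff -> : z i 0 ^+ 2 - (d 0 i * z i 0) ^+ 2 = z i 0 ^+ 2 * ((1 - d 0 i) * (1 + d 0 i)) by [].
ring.
Qed.

End H.
Arguments opnorm_ge {R m n} M {x}.
Arguments vnorm_orth {R n Q} x.
Arguments vnorm_ge_coord {R n} x i.
Arguments upper {R n} d z.
Arguments coordUt {R n}.
Arguments vdot_sym {R n}.
Arguments vnorm_ge0 {R n}.
Theorem lemma2p7 (R : realType) (n : nat) (eps : R) (A : 'M[R]_n.+2)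
    (u1 w : 'cV[R]_n.+2) (U : 'M[R]_n.+2) (d : 'rV[R]_n.+2) :
  0 < eps ->
  A^T = A ->
  U^T *m U = 1%:M ->
  A = U *m diag_mx d *m U^T ->
  col 0 U = u1 ->
  d 0 0 = 1 + 2 * eps ->
  d 0 1 = 1 ->
  (forall i : 'I_n.+2, (0 < i)%N -> `|d 0 i| <= 1) ->
  vdot u1 w ^+ 2 <= eps / 2 ->
  vdot u1 (A *m w) ^+ 2 <= eps / 2 ->
  opnorm (A *m (1%:M - w *m w^T)) > (1 + eps) * min_deflation A.
Proof.
move=> he hAs hU hA hu1 hd0 hd1 hdi ha hb.
have hUU : U *m U^T = 1%:M := mulmx1C hU.
have hUt : U^T^T *m U^T = 1%:M by rewrite trmxK.
set e0 : 'cV[R]_n.+2 := delta_mx 0 0.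
have hu1e : u1 = U *m e0 by rewrite -hu1 colE.
have hUA : U^T *m A = diag_mx d *m U^T by rewrite hA !mulmxA hU mul1mx.
have vu1 : vnorm u1 = 1 by rewrite hu1e vnorm_orth // vnorm_e0.
have opge0 : forall M : 'M[R]_n.+2, 0 <= opnorm M.
  move=> M; apply: le_trans _ (opnorm_ge M (vnorm_e0 R n.+1)); exact: vnorm_ge0.
have hup : min_deflation A <= 1.
  apply: (@le_trans _ _ (opnorm (A *m (1%:M - u1 *m u1^T)))).
    apply: ge_inf; last by exists u1.
    by exists 0 => _ [u _ <-]; exact: opge0.
  apply: ge_sup; first by exists (vnorm (A *m (1%:M - u1 *m u1^T) *m e0)); exists e0 => //; exact: vnorm_e0.
  move=> _ [x /= hx <-].
  rewrite -(vnorm_orth _ hUt).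
  have -> : U^T *m (A *m (1%:M - u1 *m u1^T) *m x) =
      diag_mx d *m ((1%:M - e0 *m e0^T) *m (U^T *m x)).
    rewrite !mulmxA hUA -!mulmxA; congr (_ *m _); rewrite !mulmxA; congr (_ *m _).
    rewrite mulmxBr mulmxBl mulmx1 mul1mx hu1e trmx_mul !mulmxA hU mul1mx //.
  apply: le_trans (upper d (U^T *m x) hdi) _; by rewrite vnorm_orth // hx.
set c := d 0 0 - vdot u1 w * vdot u1 (A *m w).
have hc : 1 + eps < c.
  rewrite /c hd0; have := sqr_ge0 (vdot u1 w + vdot u1 (A *m w)); nra.
have hlow : c <= opnorm (A *m (1%:M - w *m w^T)).
  apply: le_trans _ (opnorm_ge _ vu1).
  rewrite -(vnorm_orth _ hUt); apply: le_trans _ (vnorm_ge_coord _ 0).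
  apply: le_trans _ (ler_norm _); rewrite le_eqVlt; apply/orP; left; apply/eqP; apply: esym.
  have -> : A *m (1%:M - w *m w^T) *m u1 = A *m u1 - vdot w u1 *: (A *m w).
    rewrite -mulmxA mulmxBl mul1mx -mulmxA [w^T *m u1]mx11_scalar mul_mx_scalar.
    by rewrite mulmxBr linearZ.
  have e1 : (U^T *m (A *m u1)) 0 0 = d 0 0.
    rewrite mulmxA hUA -mulmxA hu1e [U^T *m (U *m e0)]mulmxA hU mul1mx mul_diag_mx mxE /e0 mxE !eqxx mulr1.
    by [].
  have e2 : (U^T *m (A *m w)) 0 0 = vdot u1 (A *m w) by rewrite coordUt hu1.
  rewrite mulmxBr linearZ /=.
  have e3 : forall (X Y : 'cV[R]_n.+2) a, (X - a *: Y) 0 0 = X 0 0 - a * Y 0 0.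
    by move=> X Y a; rewrite !mxE.
  rewrite e3 e1 e2 vdot_sym /c mulrC.
  by [].

apply: lt_le_trans hlow; apply: le_lt_trans hc.
rewrite -[leRHS]mulr1 ler_wpM2l //; lra.
Qed.
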